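(* Consider the finite game with players $\mathcal{M}=\{1,\dots,M\}$, common action set $\mathcal{N}$ and costs $c_i(\mathbf{a}) = \frac{\sigma^2}{h_{ia_i}}\,\frac{\beta_i}{[1-\sum_{l\in\mathcal{M}_{a_i}(\mathbf{a})}\beta_l]^+}$, and suppose $h_{ij}=h_j$ and $\beta_i=\beta$ for all $i\in\mathcal{M}$, $j\in\mathcal{N}$. Then the steady states of MAPC$^\ast$ are the Pareto efficient Nash equilibria of the game.
   Context: Uplink cellular model: mobiles $\mathcal{M}=\{1,\dots,M\}$, BSs $\mathcal{N}=\{1,\dots,N\}$, power gains $h_{ij}>0$, noise power $\sigma^2>0$, target SINRs $\gamma_i>0$, $\beta_i=\gamma_i/(1+\gamma_i)$. Association profile $\mathbf{a}\in\mathcal{N}^M$, $\mathcal{M}_j(\mathbf{a})=\{l: a_l=j\}$, $[x]^+=\max(x,0)$, positive$/0=+\infty$; $(b,\mathbf{a}_{-i})$ replaces $a_i$ by $b$. Algorithm MAPC$^\ast$: at times $t=0,1,2,\dots$, mobile $i=1+(t\bmod M)$ changes its association at $t+1$ iff $a_i(t)\notin\arg\min_{j\in\mathcal{N}}\big(c_i(j,\mathbf{a}(t)_{-i}),\ \sum_{l\in\mathcal{M}_j((j,\mathbf{a}(t)_{-i}))}\beta_l\big)$ (lexicographic minimization), in which case $a_i(t+1)$ is chosen from this argmin. A steady state of MAPC$^\ast$ is a profile from which no mobile ever changes its association. $\mathbf{a}$ is a Nash equilibrium if $a_i\in\arg\min_{b\in\mathcal{N}}c_i(b,\mathbf{a}_{-i})$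 for all $i$. $\mathbf{a}$ is Pareto dominated by $\mathbf{a}'$ if $c_i(\mathbf{a}')\le c_i(\mathbf{a})$ for all $i$ with strict inequality for some $i$; $\mathbf{a}$ is Pareto efficient if no profile Pareto dominates it. Standing assumption: there exists at least one feasible association, i.e. some $\mathbf{a}$ with $\sum_{l\in\mathcal{M}_j(\mathbf{a})}\beta_l<1$ for all $j$. *)

(* Defs.v *)
From HB Require Import structures.
From mathcomp Require Import all_boot all_order all_algebra.
From mathcomp Require Import reals constructive_ereal.
Set Implicit Arguments. Unset Strict Implicit. Unset Printing Implicit Defensive.
Import Order.TTheory GRing.Theory Num.Theory.
Local Open Scope ring_scope.

Section Model.
Variables (R : realType) (M N : nat).
(* mobiles are 'I_M, base stations are 'I_N *)
Variables (h : 'I_M -> 'I_N -> R) (sigma2 : R) (gamma : 'I_M -> R).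

Definition profile := {ffun 'I_M -> 'I_N}.

Definition beta (i : 'I_M) : R := gamma i / (1 + gamma i).

Definition load (a : profile) (j : 'I_N) : R := \sum_(l < M | a l == j) beta l.

Definition upd (a : profile) (i : 'I_M) (b : 'I_N) : profile :=
  [ffun k => if k == i then b else a k].

(* c_i(a) = sigma^2/h_{i a_i} * beta_i / [1 - load]^+ , with positive/0 = +oo *)
Definition cost (i : 'I_M) (a : profile) : \bar R :=
  if 0 < 1 - load a (a i)
  then ((sigma2 / h i (a i)) * beta i / (1 - load a (a i)))%:E
  else +oo%E.

Definition lex_le (x y : \bar R * R) : Prop :=
  (x.1 < y.1)%E \/ (x.1 = y.1 /\ x.2 <= y.2).

Definition mapc_obj (a : profile) (i : 'I_M) (j : 'I_N) : \bar R * R :=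
  (cost i (upd a i j), load (upd a i j) j).

Definition in_argmin (a : profile) (i : 'I_M) (b : 'I_N) : Prop :=
  forall j : 'I_N, lex_le (mapc_obj a i b) (mapc_obj a i j).

(* one MAPC* step at time t (mobile i with i = t mod M, 0-based) *)
Definition mapc_step (t : nat) (a a' : profile) : Prop :=
  forall i : 'I_M, (i : nat) = (t %% M)%N ->
    (forall k, k != i -> a' k = a k) /\
    (in_argmin a i (a i) -> a' i = a i) /\
    (~ in_argmin a i (a i) -> in_argmin a i (a' i)).

Definition mapc_traj (a : profile) (tr : nat -> profile) : Prop :=
  tr 0%N = a /\ forall t, mapc_step t (tr t) (tr t.+1).

Definition steady_state (a : profile) : Prop :=
  forall tr, mapc_traj a tr -> forall t, tr t = a.

Definition nash (a : profile) : Prop :=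
  forall (i : 'I_M) (b : 'I_N), (cost i a <= cost i (upd a i b))%E.

Definition pareto_dominated (a a' : profile) : Prop :=
  (forall i, (cost i a' <= cost i a)%E) /\ exists i, (cost i a' < cost i a)%E.

Definition pareto_efficient (a : profile) : Prop :=
  forall a', ~ pareto_dominated a a'.

Definition feasible (a : profile) : Prop := forall j, load a j < 1.

End Model.

(* Main.v *)
Require Import Defs.
From HB Require Import structures.
From mathcomp Require Import all_boot all_order all_algebra.
From mathcomp Require Import reals constructive_ereal.
From mathcomp Require Import lra ring zify.
From Stdlib Require Import ClassicalEpsilon.
Import Order.TTheory GRing.Theory Num.Theory.
Local Open Scope ring_scope.
Set Warnings "-notation-overridden -ambiguous-paths".

Lemma div_le_div (R : realType) (T u v : R) : 0 < T -> 0 < v -> v <= u -> T / u <= T / v.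
Proof.
move=> T0 v0 vu; have u0 : 0 < u by lra.
rewrite ler_pdivrMr // mulrAC ler_pdivlMr //; nra.
Qed.

Lemma natr_lt (R : realType) (x y : nat) : (x < y)%N -> x%:R + 1 <= y%:R :> R.
Proof. by move=> xy; rewrite natr1 ler_nat. Qed.

Lemma natr_le (R : realType) (x y : nat) : (x <= y)%N -> x%:R <= y%:R :> R.
Proof. by move=> xy; rewrite ler_nat. Qed.

Lemma fin_le (R : realType) (b : R) (x y : nat) : 0 < b ->
  (x <= y)%N -> 0 < 1 - y%:R * b -> 0 < 1 - x%:R * b.
Proof.
move=> b0 /(natr_le R); move: (x%:R) (y%:R) => X Y H fy.
have : 0 <= (Y - X) * b by nra.
lra.
Qed.

Lemma FF_lt (R : realType) (b w : R) (x y : nat) : 0 < b -> 0 < w ->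
  (x < y)%N -> 0 < 1 - y%:R * b -> w / (1 - x%:R * b) < w / (1 - y%:R * b).
Proof.
move=> b0 w0 /(natr_lt R); move: (x%:R) (y%:R) => X Y xy fy.
have H : 0 <= (Y - X - 1) * b by nra.
have fx : 0 < 1 - X * b by lra.
rewrite ltr_pdivrMr // mulrAC ltr_pdivlMr //; nra.
Qed.

Lemma FF_le (R : realType) (b w : R) (x y : nat) : 0 < b -> 0 < w ->
  (x <= y)%N -> 0 < 1 - y%:R * b -> w / (1 - x%:R * b) <= w / (1 - y%:R * b).
Proof.
move=> b0 w0; rewrite leq_eqVlt => /orP [/eqP -> //| xy fy]; exact/ltW/FF_lt.
Qed.

Arguments natr_le R {x y}.
Arguments natr_lt R {x y}.
Arguments FF_lt {R b w x y}.
Arguments FF_le {R b w x y}.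
Arguments fin_le {R b x y}.

Definition FF {R : realType} (b w : R) (k : nat) : R := w / (1 - k%:R * b).

Lemma station (R : realType) (b w T : R) (n n' m : nat) :
  0 < b -> 0 < w -> (0 < m)%N -> 0 < 1 - m%:R * b ->
  ((0 < n)%N -> 0 < 1 - n%:R * b /\ FF b w n <= T) ->
  ((0 < n')%N -> 0 < 1 - n'%:R * b /\ FF b w n' <= T) ->
  ((0 < n)%N -> FF b w n = T -> (n <= m)%N) ->
  (~ ((0 < n)%N /\ FF b w n = T) -> ~ (0 < 1 - n.+1%:R * b) \/ T <= FF b w n.+1) ->
  (0 < 1 - n.+1%:R * b -> FF b w n.+1 = T -> (m <= n.+1)%N) ->
  m%:R * (n'%:R - n%:R) <= n'%:R * (FF b w n' == T)%:R - n%:R * (FF b w n == T)%:R :> R /\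
  (n'%:R * (FF b w n' == T)%:R - n%:R * (FF b w n == T)%:R = m%:R * (n'%:R - n%:R) :> R ->
   (n'%:R - n%:R) * (T / (1 - (m%:R - 1) * b)) <= n'%:R * FF b w n' - n%:R * FF b w n).
Proof.
move=> b0 w0 m0 fm H0 H1 H4 H2 H3.
have vpos : 0 < 1 - (m%:R - 1) * b by lra.
have m1 : 1 <= m%:R :> R by rewrite (natr_le R m0).
case: (boolP ((0 < n)%N && (FF b w n == T))) => [/andP [n0 /eqP FnT] | nS].
- have nm := H4 n0 FnT; have [fn _] := H0 n0.
  have T0 : 0 < T by rewrite -FnT /FF divr_gt0.
  have wT : w = T * (1 - n%:R * b) by rewrite -FnT /FF mulfVK //; lra.
  have n'n : (n' <= n)%N.
    rewrite leqNgt; apply/negP => nn'.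
    have [fn' Fn'] := H1 (leq_ltn_trans (leq0n _) nn').
    have := FF_lt b0 w0 nn' fn'; rewrite -/(FF b w n) -/(FF b w n') FnT; lra.
  move: n'n; rewrite leq_eqVlt => /orP [/eqP -> | n'n].
    by rewrite FnT eqxx subrr !mulr0 mul0r; split=> [|_]; lra.
  rewrite FnT eqxx mulr1.
  have Ind : n'%:R * (FF b w n' == T)%:R = 0 :> R.
    case: (posnP n') => [->|n'0]; first by rewrite mul0r.
    have := FF_lt b0 w0 n'n fn; rewrite -/(FF b w n) -/(FF b w n') FnT => lt.
    by rewrite lt_eqF // mulr0.
  rewrite Ind; have n'nR := natr_lt R n'n; have nmR := natr_le R nm.
  have fn' : 0 < 1 - n'%:R * b by apply: (fin_le b0 (ltnW n'n) fn).
  have n'm : n'%:R <= m%:R - 1 :> R by lra.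
  split.
    move: (m%:R) (n%:R) (n'%:R) m1 n'nR nmR => X Y Z *; nra.
  move=> _; rewrite /FF wT.
  have -> : n'%:R * (T * (1 - n%:R * b) / (1 - n'%:R * b)) - n%:R * T =
            (n'%:R - n%:R) * (T / (1 - n'%:R * b)) by field; lra.
  have : T / (1 - n'%:R * b) <= T / (1 - (m%:R - 1) * b).
    apply: div_le_div => //; have : 0 <= (m%:R - 1 - n'%:R) * b by nra. lra.
  move: (T / _) (T / _) => A B AB; nra.
- have Indn : n%:R * (FF b w n == T)%:R = 0 :> R.
    case: (posnP n) => [->|n0]; first by rewrite mul0r.
    by move: nS; rewrite n0 /= => /negbTE ->; rewrite mulr0.
  have nS' : ~ ((0 < n)%N /\ FF b w n = T).
    by move=> [n0 FnT]; move: nS; rewrite n0 FnT eqxx.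
  rewrite Indn subr0; case: (ltnP n n') => [nn' | n'n].
  + have [fn' Fn'] := H1 (leq_ltn_trans (leq0n _) nn').
    have fn1 : 0 < 1 - n.+1%:R * b by apply: (fin_le b0 nn' fn').
    have TF : T <= FF b w n.+1 by case: (H2 nS').
    have e : n' = n.+1.
      apply/eqP; rewrite eqn_leq nn' andbT leqNgt; apply/negP => lt.
      have := FF_lt b0 w0 lt fn'; rewrite -/(FF b w n') -/(FF b w n.+1); lra.
    subst n'.
    have FT : FF b w n.+1 = T by lra.
    have mn := H3 fn1 FT; have mnR := natr_le R mn.
    have fn : 0 < 1 - n%:R * b by apply: (fin_le b0 (leqnSn n) fn1).
    have T0 : 0 < T by rewrite -FT /FF divr_gt0.
    have wT : w = T * (1 - n.+1%:R * b) by rewrite -FT /FF mulfVK //; lra.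
    rewrite FT eqxx mulr1 -natr1 in mnR *.
    split; first by lra.
    move=> _; rewrite /FF wT.
    have -> : (n%:R + 1) * T - n%:R * (T * (1 - n.+1%:R * b) / (1 - n%:R * b)) =
              T / (1 - n%:R * b) by rewrite -natr1; field; lra.
    have : T / (1 - (m%:R - 1) * b) <= T / (1 - n%:R * b).
      apply: div_le_div => //; have : 0 <= (n%:R - (m%:R - 1)) * b by nra. lra.
    lra.
  + have Indn' : n'%:R * (FF b w n' == T)%:R = 0 :> R.
      case: (posnP n') => [->|n'0]; first by rewrite mul0r.
      case: eqP => [F'T|]; last by rewrite mulr0.
      exfalso; apply: nS'.
      have n0 : (0 < n)%N by apply: leq_trans n'0 n'n.
      have [fn FnT] := H0 n0.
      have := FF_le b0 w0 n'n fn; rewrite -/(FF b w n) -/(FF b w n') F'T => le.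
      split => //; lra.
    rewrite Indn'; have nR := natr_le R n'n.
    split.
      move: (m%:R) (n%:R) (n'%:R) m1 nR => X Y Z *; nra.
    move=> H; have e : n'%:R = n%:R :> R.
      move: (m%:R) (n%:R) (n'%:R) m1 H => X Y Z *; nra.
    move/eqP: e; rewrite eqr_nat => /eqP ->; rewrite !subrr mul0r; lra.
Qed.

Lemma sum_lt (R : realType) (I : finType) (f g : I -> R) (k : I) :
  (forall j, f j <= g j) -> f k < g k -> \sum_j f j < \sum_j g j.
Proof.
move=> fg fk; rewrite (bigD1 k) //= [X in _ < X](bigD1 k) //=.
by apply: ltr_leD => //; apply: ler_sum => j _.
Qed.

Lemma nat_of_fin (R : realType) (b : R) (x y : nat) : 0 < b ->
  0 < 1 - y%:R * b -> ~~ (0 < 1 - x%:R * b) -> (y < x)%N.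
Proof.
move=> b0 fy fx; rewrite ltnNge; apply/negP => xy.
by move: fx; rewrite (fin_le b0 xy fy).
Qed.

Lemma ex_subset_card (T : finType) (A : {set T}) n : (n <= #|A|)%N ->
  exists X : {set T}, X \subset A /\ #|X| = n.
Proof.
elim: n => [|n IH] H; first by exists set0; split; [exact: sub0set | exact: cards0].
have [X [XA cX]] := IH (ltnW H).
have : (0 < #|A :\: X|)%N by rewrite cardsD (setIidPr XA) cX subn_gt0.
case/card_gt0P => x; rewrite inE => /andP [xX xA].
exists (x |: X); split; first by rewrite subUset sub1set xA XA.
by rewrite cardsU1 xX cX.
Qed.

Lemma key_ineq (R : realType) (b wk wj : R) (x y : nat) : 0 < b -> 0 < wj ->
  (x < y)%N -> 0 < 1 - y.+1%:R * b ->
  wk / (1 - y.+1%:R * b) = wj / (1 - x.+1%:R * b) ->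
  wk / (1 - y%:R * b) <= wj / (1 - x%:R * b).
Proof.
move=> b0 wj0 /(natr_lt R) xy; rewrite -!natr1.
move: (x%:R) (y%:R) xy => X Y xy fy E.
have fx : 0 < 1 - (X + 1) * b.
  have : 0 <= (Y - X) * b by nra. lra.
have wkE : wk = wj / (1 - (X + 1) * b) * (1 - (Y + 1) * b).
  by rewrite -E mulfVK //; lra.
have fX : 0 < 1 - X * b by lra.
have fY : 0 < 1 - Y * b by lra.
rewrite wkE -subr_ge0.
have -> : wj / (1 - X * b) - wj / (1 - (X + 1) * b) * (1 - (Y + 1) * b) / (1 - Y * b) =
  wj * (b * b * (Y - X)) / ((1 - X * b) * (1 - (X + 1) * b) * (1 - Y * b)).
  by field; repeat split; lra.
apply: divr_ge0; first by apply: mulr_ge0; [lra | apply: mulr_ge0; nra].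
by apply: mulr_ge0; [apply: mulr_ge0|]; lra.
Qed.

Section Main.
Variables (R : realType) (M N : nat) (h : 'I_M -> 'I_N -> R) (sigma2 : R) (gamma : 'I_M -> R).
Hypotheses (Hsigma : 0 < sigma2) (Hh : forall i j, 0 < h i j) (Hgamma : forall i, 0 < gamma i)
  (Hsym_h : forall i i' j, h i j = h i' j) (Hsym_beta : forall i i', beta gamma i = beta gamma i').
Variable i0 : 'I_M.

Definition b := beta gamma i0.
Definition cnt (a : profile M N) (j : 'I_N) : nat := \sum_(l < M | a l == j) 1.
Definition w (j : 'I_N) : R := sigma2 / h i0 j * b.
Definition fin (n : nat) : bool := 0 < 1 - n%:R * b.
Definition Fv (j : 'I_N) (n : nat) : R := w j / (1 - n%:R * b).
Definition Fe (j : 'I_N) (n : nat) : \bar R := if fin n then (Fv j n)%:E else +oo%E.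

Lemma b_pos : 0 < b.
Proof. rewrite /b /beta; have := Hgamma i0 => g; apply: divr_gt0 => //; lra. Qed.

Lemma b_lt1 : b < 1.
Proof. rewrite /b /beta; have := Hgamma i0 => g; rewrite ltr_pdivrMr; lra. Qed.

Lemma beta_eq l : beta gamma l = b.
Proof. by rewrite /b (Hsym_beta l i0). Qed.

Lemma w_pos j : 0 < w j.
Proof. rewrite /w; apply: mulr_gt0; [apply: divr_gt0 => // | exact: b_pos]. Qed.

Lemma load_cnt a j : load gamma a j = (cnt a j)%:R * b.
Proof.
rewrite /load /cnt natr_sum mulr_suml; apply: eq_bigr => l _.
by rewrite beta_eq mul1r.
Qed.

Lemma cost_Fe l a : cost h sigma2 gamma l a = Fe (a l) (cnt a (a l)).
Proof. by rewrite /cost /Fe /fin /Fv /w load_cnt beta_eq (Hsym_h l i0). Qed.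

Lemma upd_id (a : profile M N) i : upd a i (a i) = a.
Proof. by apply/ffunP => k; rewrite ffunE; case: eqP => // ->. Qed.

Lemma upd_self (a : profile M N) i j : upd a i j i = j.
Proof. by rewrite ffunE eqxx. Qed.

Lemma cnt_upd (a : profile M N) i j : a i != j -> cnt (upd a i j) j = (cnt a j).+1.
Proof.
move=> aij; rewrite /cnt (bigD1 i) /=; last by rewrite upd_self.
rewrite add1n; apply: f_equal.
rewrite [RHS](eq_bigl (fun l => (a l == j) && (l != i))); last first.
  by move=> l; case: (eqVneq l i) => [->|]; rewrite ?andbT ?andbF // (negbTE aij).
by apply: eq_bigl => l; rewrite ffunE; case: (eqVneq l i) => [->|]; rewrite ?eqxx ?andbF ?andbT.
Qed.

Lemma regroup (f : 'I_N -> R) (a : profile M N) :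
  \sum_l f (a l) = \sum_j (cnt a j)%:R * f j.
Proof.
rewrite (partition_big (fun l => a l) xpredT) //=.
apply: eq_bigr => j _; rewrite /cnt natr_sum mulr_suml.
by apply: eq_bigr => l /eqP ->; rewrite mul1r.
Qed.

Lemma sum_cnt (a : profile M N) : \sum_j (cnt a j)%:R = M%:R :> R.
Proof.
have := regroup (fun _ => 1) a; rewrite sumr_const card_ord => H.
by rewrite (eq_bigr (fun j => (cnt a j)%:R * 1)) -?H // => j _; rewrite mulr1.
Qed.

Lemma cnt_pos (a : profile M N) j : (0 < cnt a j)%N -> exists l, a l = j.
Proof.
move=> H; case: (pickP (fun l => a l == j)) => [l /eqP Hl|H0]; first by exists l.
by move: H; rewrite /cnt big_pred0.
Qed.

Definition Stab (a : profile M N) := forall i, in_argmin h sigma2 gamma a i (a i).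

Lemma Fe_fin j n : fin n -> Fe j n = (Fv j n)%:E.
Proof. by rewrite /Fe => ->. Qed.

Lemma Fe_inf j n : ~~ fin n -> Fe j n = +oo%E.
Proof. by rewrite /Fe => /negbTE ->. Qed.

Lemma cnt_gt0 (a : profile M N) l : (0 < cnt a (a l))%N.
Proof. by rewrite /cnt (bigD1 l) //= add1n. Qed.

Lemma cost_upd (a : profile M N) l j : a l != j ->
  cost h sigma2 gamma l (upd a l j) = Fe j (cnt a j).+1.
Proof. by move=> alj; rewrite cost_Fe upd_self cnt_upd. Qed.

Lemma Stab_NE a : Stab a -> nash h sigma2 gamma a.
Proof.
move=> S i j; have := S i j; rewrite /lex_le /mapc_obj /= upd_id.
by case=> [lt|[-> _]]; [exact: ltW|].
Qed.

Lemma Stab_tie a l j : Stab a -> a l != j ->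
  Fe (a l) (cnt a (a l)) = Fe j (cnt a j).+1 -> (cnt a (a l) <= (cnt a j).+1)%N.
Proof.
move=> S alj E; have := S l j; rewrite /lex_le /mapc_obj /= upd_id cost_upd //.
rewrite cost_Fe E ltxx => -[//|[_]]; rewrite !load_cnt cnt_upd //.
by rewrite ler_pM2r ?b_pos // ler_nat.
Qed.

Lemma NE_fin a : nash h sigma2 gamma a -> (exists a' : profile M N, feasible gamma a') ->
  forall l, fin (cnt a (a l)).
Proof.
move=> NE [a' Ha'] l; apply/negPn/negP => nf.
have Hj j : j != a l -> ~~ fin (cnt a j).+1.
  move=> ja; have := NE l j; rewrite cost_upd 1?eq_sym // cost_Fe Fe_inf //.
  by rewrite leye_eq; apply: contraL => fj; rewrite Fe_fin.
have fa' j : fin (cnt a' j) by rewrite /fin -load_cnt subr_gt0; apply: Ha'.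
have : \sum_j (cnt a' j)%:R < \sum_j (cnt a j)%:R :> R.
  apply: (@sum_lt R _ _ _ (a l)) => [j|]; last first.
    by rewrite ltr_nat; apply: nat_of_fin b_pos (fa' _) nf.
  rewrite ler_nat; case: (eqVneq j (a l)) => [->|ja].
    by apply: ltnW; apply: nat_of_fin b_pos (fa' _) nf.
  by rewrite -ltnS; apply: nat_of_fin b_pos (fa' _) (Hj j ja).
by rewrite !sum_cnt ltxx.
Qed.

Lemma Stab_PE a : Stab a -> (exists a' : profile M N, feasible gamma a') ->
  pareto_efficient h sigma2 gamma a.
Proof.
move=> S Hf a' [Hd [p Hp]].
have NE := Stab_NE _ S; have Fa := NE_fin _ NE Hf.
set n := cnt a; set n' := cnt a'.
have cA l : cost h sigma2 gamma l a = (Fv (a l) (n (a l)))%:E by rewrite cost_Fe Fe_fin.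
have Fa' l : fin (n' (a' l)).
  apply/negPn/negP => nf; have := Hd l; rewrite cA cost_Fe Fe_inf //.
have cA' l : cost h sigma2 gamma l a' = (Fv (a' l) (n' (a' l)))%:E by rewrite cost_Fe Fe_fin.
set va := fun l => Fv (a l) (n (a l)).
set va' := fun l => Fv (a' l) (n' (a' l)).
have Hd' l : va' l <= va l by have := Hd l; rewrite cA cA' lee_fin.
have Hp' : va' p < va p by have := Hp; rewrite cA cA' lte_fin.
pose imax := [arg max_(l > i0) va l]%O.
have Tmax : forall l, va l <= va imax.
  by rewrite /imax; case: arg_maxP => //= i _ Hi l; apply: Hi.
set T := va imax; set k0 := a imax.
pose Sp := [pred k | (0 < n k)%N && (Fv k (n k) == T)].
have Sk0 : k0 \in Sp by rewrite inE /= cnt_gt0 eqxx.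
pose m := \max_(k in Sp) n k.
have [k1 k1S mE] : {k1 | k1 \in Sp & m = n k1}.
  by apply: eq_bigmax_cond; apply/card_gt0P; exists k0.
have := k1S; rewrite inE /= => /andP [nk1 /eqP Fk1].
have [l1 al1] := cnt_pos _ _ nk1.
have m0 : (0 < m)%N by rewrite mE.
have fm : fin m by rewrite mE -al1; apply: Fa.
have cI : cost h sigma2 gamma imax a = T%:E by rewrite cA.
have FFE j : FF b (w j) = Fv j by [].
have Hst j := @station R b (w j) T (n j) (n' j) m b_pos (w_pos j) m0 fm.
have {}Hst j : m%:R * ((n' j)%:R - (n j)%:R) <=
     (n' j)%:R * (Fv j (n' j) == T)%:R - (n j)%:R * (Fv j (n j) == T)%:R :> R /\
   ((n' j)%:R * (Fv j (n' j) == T)%:R - (n j)%:R * (Fv j (n j) == T)%:R =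
      m%:R * ((n' j)%:R - (n j)%:R) :> R ->
   ((n' j)%:R - (n j)%:R) * (T / (1 - (m%:R - 1) * b)) <=
     (n' j)%:R * Fv j (n' j) - (n j)%:R * Fv j (n j)).
  apply: Hst.
  - move=> nj; have [l al] := cnt_pos _ _ nj; split; first by rewrite -al; apply: Fa.
    by have := Tmax l; rewrite /va /= al.
  - move=> nj; have [l al] := cnt_pos _ _ nj; split; first by rewrite -al; apply: Fa'.
    by have := le_trans (Hd' l) (Tmax l); rewrite /va' /= al.
  - move=> nj FT; rewrite /m; apply: (@leq_bigmax_cond _ (fun k => k \in Sp)); by rewrite inE /= nj -FFE FT eqxx.
  - move=> nS; have jk0 : k0 != j.
      by apply/eqP => e; apply: nS; move: Sk0; rewrite e inE /= => /andP [-> /eqP].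
    have := NE imax j; rewrite cI cost_upd //.
    case: (boolP (fin (n j).+1)) => fj; last by left; apply/negP.
    by rewrite Fe_fin // lee_fin; right.
  - move=> fj FT; case: (eqVneq k1 j) => [<-|kj]; first by rewrite mE.
    rewrite mE -al1; apply: Stab_tie => //; first by rewrite al1.
    rewrite al1 !Fe_fin //; [by rewrite Fk1 -FFE FT | by rewrite -al1 Fa].
pose D j : R := (n' j)%:R - (n j)%:R.
pose E j : R := (n' j)%:R * (Fv j (n' j) == T)%:R - (n j)%:R * (Fv j (n j) == T)%:R.
pose Q : R := T / (1 - (m%:R - 1) * b).
have sD : \sum_j D j = 0 by rewrite sumrB !sum_cnt subrr.
have sE : \sum_j E j <= 0.
  rewrite sumrB subr_le0 -(regroup (fun j => (Fv j (n' j) == T)%:R) a').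
  rewrite -(regroup (fun j => (Fv j (n j) == T)%:R) a).
  apply: ler_sum => l _; case: eqP => E'; last by case: eqP.
  have : va l = T.
    apply: le_anti; rewrite Tmax /=; have := Hd' l; rewrite /va' /= E'; exact.
  by rewrite /va /= => ->; rewrite eqxx.
have sF : \sum_j ((n' j)%:R * Fv j (n' j) - (n j)%:R * Fv j (n j)) < 0 :> R.
  rewrite sumrB subr_lt0 -(regroup (fun j => Fv j (n' j)) a').
  rewrite -(regroup (fun j => Fv j (n j)) a).
  exact: (@sum_lt R _ va' va p).
have e0 j : E j = m%:R * D j.
  have H := @psumr_eq0P R _ xpredT (fun j => E j - m%:R * D j).
  apply/eqP; rewrite -subr_eq0; apply/eqP; apply: H => //.
    by move=> i _; rewrite subr_ge0; case: (Hst i).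
  apply/eqP; rewrite eq_le sumrB -mulr_sumr sD mulr0 subr0 sE /=.
  apply: (@le_trans _ _ (\sum_i m%:R * D i)); first by rewrite -mulr_sumr sD mulr0.
  by apply: ler_sum => i _; case: (Hst i).
have : \sum_j D j * Q <= \sum_j ((n' j)%:R * Fv j (n' j) - (n j)%:R * Fv j (n j)).
  by apply: ler_sum => i _; case: (Hst i) => _; apply; apply: e0.
rewrite -mulr_suml sD mul0r; move: sF; move: (\sum_j _) => X; lra.
Qed.

Lemma Fe_le j n1 n2 : (n1 <= n2)%N -> (Fe j n1 <= Fe j n2)%E.
Proof.
move=> le; case: (boolP (fin n2)) => f2; last by rewrite (Fe_inf _ _ f2) leey.
have f1 := fin_le b_pos le f2.
by rewrite !Fe_fin // lee_fin; exact: FF_le b_pos (w_pos j) le f2.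
Qed.

Lemma Fe_lt j n1 n2 : (n1 < n2)%N -> fin n2 -> (Fe j n1 < Fe j n2)%E.
Proof.
move=> lt f2; have f1 := fin_le b_pos (ltnW lt) f2.
by rewrite !Fe_fin // lte_fin; exact: FF_lt b_pos (w_pos j) lt f2.
Qed.

Lemma cnt_card (a : profile M N) j : cnt a j = #|[set l | a l == j]|.
Proof. by rewrite /cnt -sum1_card; apply: eq_bigl => l; rewrite inE. Qed.

Lemma NE_PE_Stab a : nash h sigma2 gamma a -> pareto_efficient h sigma2 gamma a ->
  (exists a' : profile M N, feasible gamma a') -> Stab a.
Proof.
move=> NE PE Hf i j; have Fa := NE_fin _ NE Hf.
rewrite /lex_le /mapc_obj /= upd_id.
case: (eqVneq (a i) j) => [<-|ij]; first by right; rewrite upd_id.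
have := NE i j; rewrite le_eqVlt => /orP [/eqP E|]; last by left.
right; split => //.
rewrite !load_cnt cnt_upd // ler_pM2r ?b_pos // ler_nat leqNgt; apply/negP => lt.
move: E; rewrite cost_Fe cost_upd //.
have fy := Fa i.
move: ij lt fy; set k := a i; set x := cnt a j; set y := cnt a k => ij lt fy E.
have fx1 : fin x.+1.
  apply/negPn/negP => nf; move: E; rewrite Fe_fin // Fe_inf //.
have Ev : Fv k y = Fv j x.+1 by move: E; rewrite !Fe_fin // => -[].
pose B := [set l | a l == k].
pose A := [set l | (a l == k) && (l != i)].
have AB : A \subset B by apply/subsetP => l; rewrite !inE => /andP [].
have iA : i \notin A by rewrite inE eqxx andbF.
have cA : #|B| = (#|A|).+1.
  have -> : B = i |: A.
    apply/setP => l; rewrite !inE; case: (eqVneq l i) => [->|]; by rewrite ?eqxx ?andbT.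
  by rewrite cardsU1 iA.
have yB : y = #|B| by rewrite /y cnt_card.
have [X [XA cX]] : exists X : {set 'I_M}, X \subset A /\ #|X| = x.+1.
  by apply: ex_subset_card; rewrite -ltnS -cA -yB.
have XB : X \subset B by apply: subset_trans AB.
pose a' : profile M N := [ffun l => if a l == j then k else if l \in X then j else a l].
have kj : k != j by [].
have cj : (cnt a' j <= x.+1)%N.
  rewrite cnt_card -cX; apply: subset_leq_card; apply/subsetP => l.
  rewrite !inE ffunE; case: (eqVneq (a l) j) => alj; first by rewrite (negbTE kj).
  by case: (l \in X); rewrite //= (negbTE alj).
have y0 : (0 < y)%N by apply: leq_ltn_trans lt.
have yE : y = y.-1.+1 by rewrite prednK.
have ck : (cnt a' k <= y.-1)%N.
  rewrite cnt_card; apply: (@leq_trans #|[set l | a l == j] :|: (B :\: X)|).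
    apply: subset_leq_card; apply/subsetP => l; rewrite !inE ffunE.
    case: (eqVneq (a l) j) => alj //=.
    by case: (l \in X) => //=; rewrite eq_sym (negbTE kj).
  rewrite cardsU; apply: leq_trans (leq_subr _ _) _.
  rewrite cardsD (setIidPr XB) cX -yB -cnt_card -/x; lia.
have cs s : s != j -> s != k -> (cnt a' s <= cnt a s)%N.
  move=> sj sk; rewrite !cnt_card; apply: subset_leq_card; apply/subsetP => l.
  rewrite !inE ffunE; case: (eqVneq (a l) j) => alj; first by rewrite eq_sym (negbTE sk).
  by case: (l \in X) => //=; rewrite eq_sym (negbTE sj).
have iX : i \notin X by apply: contra iA; apply/subsetP.
apply: (PE a'); split; last first.
  exists i; rewrite !cost_Fe ffunE (negbTE ij) (negbTE iX) -/k -/y.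
  apply: (le_lt_trans (Fe_le k _ _ ck)); apply: Fe_lt => //; by rewrite ltn_predL.
move=> l; rewrite !cost_Fe ffunE.
case: (eqVneq (a l) j) => alj.
  rewrite alj -/x; apply: le_trans (Fe_le k _ _ ck) _.
  have fx : fin x by apply: fin_le b_pos (leqnSn x) fx1.
  rewrite yE in fy Ev.
  have fy1 : fin y.-1 by apply: fin_le b_pos (leqnSn _) fy.
  rewrite !Fe_fin // lee_fin; apply: key_ineq b_pos (w_pos j) _ fy Ev.
  lia.
case: (boolP (l \in X)) => lX.
  have : l \in A by apply: (subsetP XA).
  rewrite inE => /andP [/eqP -> _]; rewrite -/y E.
  exact: Fe_le j _ _ cj.
case: (eqVneq (a l) k) => alk.
  rewrite alk -/y; apply: le_trans (Fe_le k _ _ ck) (Fe_le k _ _ (leq_pred y)).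
exact: Fe_le (a l) _ _ (cs (a l) alj alk).
Qed.

Lemma Mpos : (0 < M)%N.
Proof. by apply: leq_ltn_trans (leq0n i0) (ltn_ord i0). Qed.

Lemma argmin_ex (a : profile M N) i : exists bb, in_argmin h sigma2 gamma a i bb.
Proof.
pose f1 j := (mapc_obj h sigma2 gamma a i j).1.
pose f2 j := (mapc_obj h sigma2 gamma a i j).2.
pose j1 := Order.arg_min (a i) xpredT f1.
have H1 : forall j, (f1 j1 <= f1 j)%E.
  by rewrite /j1; case: arg_minP => //= jj _ Hj j; apply: Hj.
pose P := fun j => f1 j == f1 j1.
pose j2 := Order.arg_min j1 P f2.
have [Pj2 H2] : P j2 /\ forall j, P j -> f2 j2 <= f2 j.
  by rewrite /j2; case: arg_minP => [|jj Pjj Hj]; [rewrite /P eqxx | split].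
exists j2 => j; rewrite /lex_le -/(f1 j2) -/(f1 j) -/(f2 j2) -/(f2 j).
move/eqP: Pj2 => ->; case: (ltP (f1 j1) (f1 j)) => [lt|le]; first by left.
right; have e : f1 j = f1 j1 by apply: le_anti; rewrite le H1.
by split; [rewrite e | apply: H2; rewrite /P e].
Qed.

Definition cho (a : profile M N) i : 'I_N :=
  proj1_sig (constructive_indefinite_description _ (argmin_ex a i)).

Lemma choP a i : in_argmin h sigma2 gamma a i (cho a i).
Proof. exact: proj2_sig (constructive_indefinite_description _ (argmin_ex a i)). Qed.

Definition itm (t : nat) : 'I_M := Ordinal (ltn_pmod t Mpos).

Definition nxt (t : nat) (x : profile M N) : profile M N :=
  [ffun k => if k == itm t then
     (if excluded_middle_informative (in_argmin h sigma2 gamma x (itm t) (x (itm t)))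
      then x (itm t) else cho x (itm t))
   else x k].

Fixpoint traj (a : profile M N) (t : nat) : profile M N :=
  match t with 0 => a | t'.+1 => nxt t' (traj a t') end.

Lemma step_ok t x : mapc_step h sigma2 gamma t x (nxt t x).
Proof.
move=> i iE; have -> : i = itm t by apply: val_inj.
split; first by move=> k kit; rewrite ffunE (negbTE kit).
split=> H; rewrite ffunE eqxx; destruct excluded_middle_informative as [Y|Y] => //.
by apply: choP.
Qed.

Lemma traj_ok a : mapc_traj h sigma2 gamma a (traj a).
Proof. by split => // t; apply: step_ok. Qed.

Lemma steady_Stab a : steady_state h sigma2 gamma a -> Stab a.
Proof.
move=> St i; have T := traj_ok a.
have e1 := St _ T i; have e2 := St _ T i.+1.
have [_ [_ H]] := step_ok i (traj a i) i (esym (modn_small (ltn_ord i))).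
move: H; rewrite /= -/(traj a i.+1) e1 e2 => H.
by case: (classic (in_argmin h sigma2 gamma a i (a i))) => // /H.
Qed.

Lemma Stab_steady a : Stab a -> steady_state h sigma2 gamma a.
Proof.
move=> S tr [t0 Ht] t; elim: t => // t IH; apply/ffunP => k.
have [Hk1 [Hk2 _]] := Ht t (itm t) erefl.
rewrite IH in Hk1 Hk2; case: (eqVneq k (itm t)) => [->|kit].
  by apply: Hk2; apply: S.
exact: Hk1.
Qed.

End Main.

Lemma ord_M0 M (i : 'I_M) : M = 0%N -> False.
Proof. by case: i => i Hi M0; rewrite M0 in Hi. Qed.

Theorem proposition4 (R : realType) (M N : nat)
  (h : 'I_M -> 'I_N -> R) (sigma2 : R) (gamma : 'I_M -> R)
  (Hsigma : 0 < sigma2)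
  (Hh : forall i j, 0 < h i j)
  (Hgamma : forall i, 0 < gamma i)
  (Hfeas : exists a : profile M N, feasible gamma a)
  (Hsym_h : forall (i i' : 'I_M) (j : 'I_N), h i j = h i' j)
  (Hsym_beta : forall i i' : 'I_M, beta gamma i = beta gamma i') :
  forall a : profile M N,
    steady_state h sigma2 gamma a <->
    (nash h sigma2 gamma a /\ pareto_efficient h sigma2 gamma a).
Proof.
move=> a; case: (posnP M) => [M0|Mp].
  split.
    move=> _; split; first by move=> i; case: (@ord_M0 M i M0).
    by move=> a' [_ [i _]]; case: (@ord_M0 M i M0).
  move=> _ tr [t0 _] t; apply/ffunP => i; case: (@ord_M0 M i M0).
pose i0 := Ordinal Mp.
split.
  move=> St; have S := @steady_Stab R M N h sigma2 gamma i0 a St.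
  split; first exact: (@Stab_NE R M N h sigma2 gamma).
  exact: (@Stab_PE R M N h sigma2 gamma Hsigma Hh Hgamma Hsym_h Hsym_beta i0 a S Hfeas).
move=> [NE PE]; apply: (@Stab_steady R M N h sigma2 gamma i0).
exact: (@NE_PE_Stab R M N h sigma2 gamma Hsigma Hh Hgamma Hsym_h Hsym_beta i0 a NE PE Hfeas).
Qed.
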